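(* Let $p,q,l,N\in\mathbb{Z}_{\geq 0}$, $s=p+q$, and let $M=(M_1,\dots,M_s)\in\mathrm{Sym}_N^{p}\times\mathrm{Alt}_N^{q}$. Suppose there is a subspace $V\subseteq\mathbb{C}^N$ of dimension $2^sl$ such that $M_1V+\dots+M_sV$ has dimension $s2^sl$. Then there is $g\in\mathrm{GL}_N(\mathbb{C})$ such that for each $i\in\{1,\dots,s\}$, the $N\times l$ matrix formed by the first $l$ columns of $gM_ig^T$ has the following block form (blocks of $l$ rows each, followed by a final block of $N-(s+1)l$ rows): the first block is $0_{l\times l}$, the $(i+1)$-st block is the identity $\mathrm{Id}_l$, all other blocks of size $l\times l$ are $0$, and the final $(N-(s+1)l)\times l$ block is $0$.
   Context: $\mathrm{Sym}_N$ and $\mathrm{Alt}_N$ denote the spaces of symmetric, respectively skew-symmetric, complex $N\times N$ matrices; the first $p$ entries of $M$ are symmetric and the last $q$ are skew-symmetric. *)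

(* Defs.v *)
From HB Require Import structures.
From mathcomp Require Import all_boot all_order all_algebra.
Set Implicit Arguments. Unset Strict Implicit. Unset Printing Implicit Defensive.
Import Order.TTheory GRing.Theory Num.Theory.
Local Open Scope ring_scope.

(* Vectors of F^N are represented as ROW vectors; a subspace V is the row
   space of a matrix.  The image M V = {M v | v in V} (column convention)
   is the row space of  V *m M^T  in the row convention. *)
Definition image_space (F : fieldType) (N k : nat) (M : 'M[F]_N)
  (V : 'M[F]_(k, N)) : 'M[F]_(k, N) := V *m M^T.

(* Main.v *)
Require Import Defs.
From HB Require Import structures.
From mathcomp Require Import all_boot all_order all_algebra.
From mathcomp Require Import ring lra zify.
Import Order.TTheory GRing.Theory Num.Theory.
Local Open Scope ring_scope.
Set Implicit Arguments. Unset Strict Implicit.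

Lemma idx_inj (l i i' c c' : nat) : (c < l)%N -> (c' < l)%N ->
  (l * i.+1 + c = l * i'.+1 + c')%N -> i = i' /\ c = c'.
Proof.
move=> hc hc' h.
have : i = i'.
  case: (ltngtP i i') => // hi; exfalso.
  - have : (l * i.+1 + l <= l * i'.+1)%N by rewrite -mulnSr leq_mul2l ltnS hi orbT.
    lia.
  - have : (l * i'.+1 + l <= l * i.+1)%N by rewrite -mulnSr leq_mul2l ltnS hi orbT.
    lia.
move=> e; split => //; move: h; rewrite e; lia.
Qed.
Section Aux.
Variable F : fieldType.
Variable N : nat.

Definition Ep (P : pred 'I_N) : 'M[F]_N := diag_mx (\row_j (P j)%:R).

Lemma EpMl P (A : 'M[F]_N) i j : (Ep P *m A) i j = (P i)%:R * A i j.
Proof. by rewrite mul_diag_mx !mxE. Qed.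
Lemma EpMr P m (A : 'M[F]_(m, N)) i j : (A *m Ep P) i j = A i j * (P j)%:R.
Proof. by rewrite mul_mx_diag !mxE. Qed.
Lemma EpE P i j : Ep P i j = ((P i) && (i == j))%:R.
Proof. by rewrite !mxE; case: (P i); case: eqP => //= ->. Qed.
Lemma EpEp (P Q : pred (ordinal N)) : Ep P *m Ep Q = Ep (predI P Q).
Proof.
apply/matrixP => i j; rewrite EpMl !EpE /=.
by case: (P i); case: eqP => [->|]; case: (Q j); rewrite ?andbF ?mul1r ?mul0r.
Qed.
Lemma Epid P : Ep P *m Ep P = Ep P.
Proof. by rewrite EpEp; apply/matrixP => i j; rewrite !EpE /= andbb. Qed.
Lemma Ep_tr P : (Ep P)^T = Ep P.
Proof. exact: tr_diag_mx. Qed.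
Lemma EpT : Ep predT = 1%:M.
Proof. by apply/matrixP => i j; rewrite EpE !mxE. Qed.
Lemma EpD (P Q : pred (ordinal N)) : (forall j, P j -> ~~ Q j) -> Ep P + Ep Q = Ep (predU P Q).
Proof.
move=> H; apply/matrixP => i j.
have -> : (Ep P + Ep Q) i j = Ep P i j + Ep Q i j by rewrite mxE.
rewrite !EpE /=.
case Pi: (P i); case Qi: (Q i) => //=; first by move: (H i Pi); rewrite Qi.
  by rewrite addr0. by rewrite add0r. by rewrite addr0.
Qed.

Lemma addE m n (A B : 'M[F]_(m, n)) i j : (A + B) i j = A i j + B i j.
Proof. by rewrite mxE. Qed.
Lemma scaleE m n c (A : 'M[F]_(m, n)) i j : (c *: A) i j = c * A i j.
Proof. by rewrite mxE. Qed.

Definition indep (P : pred 'I_N) (A : 'M[F]_N) :=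
  forall a : 'rV[F]_N, a *m Ep P = a -> a *m A = 0 -> a = 0.


Lemma Ep_sub (P Q : pred 'I_N) : (forall j, P j -> Q j) -> Ep P *m Ep Q = Ep P.
Proof.
move=> H; apply/matrixP => i j; rewrite EpMl !EpE.
case Pi: (P i) => /=; last by rewrite mul0r.
by rewrite (H i Pi) mul1r.
Qed.

Lemma ext_step (P : pred 'I_N) (A : 'M[F]_N) (j0 : 'I_N) :
  ~~ P j0 -> indep P A ->
  exists A' : 'M[F]_N, Ep P *m A' = Ep P *m A /\ indep (predU1 j0 P) A'.
Proof.
move=> Pj0 hA; set B := Ep P *m A.
have [v vB] : exists v : 'rV[F]_N, ~~ (v <= B)%MS.
  case: (boolP (1%:M <= B)%MS) => H; last first.
    by case/row_subPn: H => k Hk; exists (row k 1%:M).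
  exfalso; move: H; rewrite sub1mx row_full_unit -row_free_unit => Hf.
  have: (delta_mx 0 j0 : 'rV[F]_N) *m B == 0.
    rewrite /B mulmxA; apply/eqP.
    have -> : (delta_mx 0 j0 : 'rV[F]_N) *m Ep P = 0.
      apply/matrixP => i j; rewrite EpMr !mxE.
      rewrite (ord1 i) eqxx /=; case: (eqVneq j j0) => [->|hj].
        by rewrite (negPf Pj0) mulr0.
      by rewrite mul0r.
    by rewrite mul0mx.
  rewrite (mulmx_free_eq0 _ Hf) => /eqP /matrixP /(_ 0 j0); rewrite !mxE !eqxx /=.
  by move/eqP; rewrite oner_eq0.
set A' := \matrix_(i, j) (if i == j0 then v 0 j else A i j).
have hEA : Ep P *m A' = Ep P *m A.
  apply/matrixP => i j; rewrite !EpMl !mxE.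
  by case: eqP => [->|//]; rewrite (negPf Pj0) !mul0r.
exists A'; split => //.
move=> a ha haA.
set b := a *m Ep P.
have hab : a = b + a 0 j0 *: delta_mx 0 j0.
  apply/matrixP => i j; rewrite addE scaleE /b EpMr !mxE (ord1 i).
  move/matrixP: ha => /(_ 0 j); rewrite EpMr /= => ha.
  case: (eqVneq j j0) => [->|hj]; first by rewrite (negPf Pj0) mulr0 add0r mulr1.
  by move: ha; rewrite (negPf hj) /= => ha; rewrite mulr0 addr0 ha.
have hbA' : b *m A' = b *m A by rewrite /b -!mulmxA hEA.
have hrow : (delta_mx 0 j0 : 'rV[F]_N) *m A' = v.
  by rewrite -rowE; apply/rowP => j; rewrite !mxE eqxx.
move: haA; rewrite {1}hab mulmxDl -scalemxAl hbA' hrow => H.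
have a0 : a 0 j0 = 0.
  apply/eqP; apply/negPn/negP => hne; move: vB; apply/negP/negPn.
  have e : a 0 j0 *: v = - (b *m A) by apply/eqP; rewrite -addr_eq0 addrC H.
  have -> : v = (a 0 j0)^-1 *: - (b *m A) by rewrite -e scalerA mulVf // scale1r.
  apply: scalemx_sub; rewrite -scaleN1r; apply: scalemx_sub.
  by rewrite /b -mulmxA submxMl.
move: H; rewrite a0 scale0r addr0 => H.
have b0 : b = 0 by apply: hA => //; rewrite /b -mulmxA Epid.
by rewrite hab b0 a0 scale0r addr0.
Qed.


Lemma ext_unit (P : pred 'I_N) (A : 'M[F]_N) :
  indep P A -> exists h : 'M[F]_N, h \in unitmx /\ Ep P *m h = Ep P *m A.
Proof.
move: {2}#|[predC P]| (leqnn #|[predC P]|) => n.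
elim: n P A => [|n IH] P A hc hA.
  case: (boolP [exists j, ~~ P j]) => [/existsP [j0 Pj0] | /existsPn allP].
    have : (0 < #|[predC P]|)%N by apply/card_gt0P; exists j0.
    by rewrite leqn0 in hc; rewrite (eqP hc).
  exists A; split => //.
  rewrite -row_free_unit; apply: inj_row_free => a ha; apply: hA => //.
  have -> : Ep P = 1%:M.
    by rewrite -EpT; apply/matrixP => i j; rewrite !EpE /= (negPn (allP i)).
  by rewrite mulmx1.
case: (boolP [exists j, ~~ P j]) => [/existsP [j0 Pj0] | /existsPn allP].
  have [A' [hEA hA']] := ext_step Pj0 hA.
  have hc' : (#|[predC predU1 j0 P]| <= n)%N.
    move: hc; rewrite (cardD1 j0) inE Pj0 add1n ltnS.
    move=> h; apply: leq_trans h; apply: subset_leq_card; apply/subsetP => x.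
    rewrite !inE negb_or => /andP [-> ->] //.
  have [h [hu hh]] := IH _ _ hc' hA'.
  exists h; split => //.
  have hs : Ep P = Ep P *m Ep (predU1 j0 P).
    by symmetry; apply: Ep_sub => j Pj /=; rewrite Pj orbT.
  by rewrite {1}hs -mulmxA hh mulmxA -hs hEA.
exists A; split => //.
rewrite -row_free_unit; apply: inj_row_free => a ha; apply: hA => //.
have -> : Ep P = 1%:M.
  by rewrite -EpT; apply/matrixP => i j; rewrite !EpE /= (negPn (allP i)).
by rewrite mulmx1.
Qed.

End Aux.
Arguments Ep {F N} P.
Arguments indep {F N} P A.

Section Iso.
Variable F : numClosedFieldType.
Variable N : nat.

Lemma addE' m n (A B : 'M[F]_(m, n)) i j : (A + B) i j = A i j + B i j.
Proof. by rewrite mxE. Qed.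
Lemma scaleE' m n c (A : 'M[F]_(m, n)) i j : (c *: A) i j = c * A i j.
Proof. by rewrite mxE. Qed.

Lemma mx11_eq0 (x : 'M[F]_1) : x 0 0 = 0 -> x = 0.
Proof. by move=> h; apply/matrixP => i j; rewrite (ord1 i) (ord1 j) h mxE. Qed.

Lemma quad_root (al be ga : F) : ga != 0 ->
  exists t : F, al + t * be + t ^+ 2 * ga = 0.
Proof.
move=> hg; set D := be ^+ 2 - 4%:R * al * ga.
exists ((sqrtC D - be) / (2%:R * ga)).
have h2 : (2%:R : F) != 0 by rewrite pnatr_eq0.
have -> : al + (sqrtC D - be) / (2%:R * ga) * be + ((sqrtC D - be) / (2%:R * ga)) ^+ 2 * ga
   = (sqrtC D ^+ 2 - D) / (4%:R * ga).
  rewrite /D; field.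
  exact: hg.
by rewrite sqrtCK subrr mul0r.
Qed.

Lemma iso_vec (A : 'M[F]_N) (W : 'M[F]_N) : (2 <= \rank W)%N ->
  exists w : 'rV[F]_N, [/\ (w <= W)%MS, w != 0 & w *m A *m w^T = 0].
Proof.
move=> h2.
have h0 : (0 < \rank W)%N by apply: leq_trans h2.
have h1 : (1 < \rank W)%N by [].
set B := row_base W.
set i0 := Ordinal h0; set i1 := Ordinal h1.
have hfree := row_base_free W.
have subW : forall i, (row i B <= W)%MS.
  by move=> i; apply: submx_trans (row_sub i B) _; rewrite eq_row_base.
have neq : forall (c : F), delta_mx 0 i0 + c *: delta_mx 0 i1 != 0 :> 'rV[F]_(\rank W).
  move=> c; apply/eqP => /matrixP /(_ 0 i0); rewrite addE' scaleE' !mxE !eqxx /=.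
  by rewrite mulr0 addr0 => /eqP; rewrite oner_eq0.
set a := row i0 B; set b := row i1 B.
case: (eqVneq (b *m A *m b^T) 0) => hb.
  exists b; split; [exact: subW | | exact: hb].
  apply/eqP => /eqP; rewrite /b rowE mulmx_free_eq0 //.
  by move=> /eqP/matrixP/(_ 0 i1); rewrite !mxE !eqxx => /eqP; rewrite oner_eq0.
set al := (a *m A *m a^T) 0 0.
set be := (a *m A *m b^T + b *m A *m a^T) 0 0.
set ga := (b *m A *m b^T) 0 0.
have hg : ga != 0 by apply/eqP => h; move: hb; rewrite (mx11_eq0 h) eqxx.
have [t ht] := quad_root al be hg.
exists (a + t *: b); split.
- by rewrite addmx_sub ?scalemx_sub ?subW.
- have -> : a + t *: b = (delta_mx 0 i0 + t *: delta_mx 0 i1) *m B.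
    by rewrite mulmxDl -scalemxAl -!rowE.
  by rewrite mulmx_free_eq0 // neq.
- apply: mx11_eq0; rewrite -ht /al /be /ga.
  rewrite linearD /= linearZ /= !mulmxDl !mulmxDr -!scalemxAl -!scalemxAr.
  rewrite !addE' !scaleE'; ring.
Qed.


Definition iso (A : 'M[F]_N) (W : 'M[F]_N) :=
  forall x y : 'rV[F]_N, (x <= W)%MS -> (y <= W)%MS -> x *m A *m y^T = 0.

Lemma iso_sub A W W' : (W' <= W)%MS -> iso A W -> iso A W'.
Proof. by move=> hs hi x y hx hy; apply: hi; apply: submx_trans hs. Qed.

Lemma iso_add (A : 'M[F]_N) (W3 : 'M[F]_N) (w : 'rV[F]_N)
  (hA : forall x y : 'rV[F]_N, x *m A *m y^T = 0 -> y *m A *m x^T = 0) :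
  iso A W3 -> (W3 <= kermx (A *m w^T))%MS -> w *m A *m w^T = 0 ->
  iso A (W3 + w)%MS.
Proof.
move=> hi hK hw.
have hx1 : forall (x1 : 'rV[F]_N) (c : 'M[F]_1), (x1 <= W3)%MS -> x1 *m A *m (c *m w)^T = 0.
  move=> x1 c h1; rewrite trmx_mul mulmxA -(mulmxA x1).
  by move/sub_kermxP: (submx_trans h1 hK) ->; rewrite mul0mx.
move=> x y /sub_addsmxP [[u1 u2] ->] /sub_addsmxP [[v1 v2] ->] /=.
rewrite linearD /= !mulmxDl !mulmxDr.
rewrite hi ?submxMl // hx1 ?submxMl // (hA _ _ (hx1 _ _ _)) ?submxMl //.
by rewrite trmx_mul !mulmxA -(mulmxA _ w) -(mulmxA _ _ w^T) hw mulmx0 mul0mx !addr0.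
Qed.

Lemma halve (A : 'M[F]_N)
  (hA : forall x y : 'rV[F]_N, x *m A *m y^T = 0 -> y *m A *m x^T = 0) :
  forall m (W : 'M[F]_N), (2 * m <= \rank W)%N ->
  exists W' : 'M[F]_N, [/\ (W' <= W)%MS, iso A W' & (m <= \rank W')%N].
Proof.
elim => [|m IH] W hW.
  exists 0; split => //; first exact: sub0mx.
  by move=> x y; rewrite !submx0 => /eqP -> _; rewrite !mul0mx.
have h2W : (2 <= \rank W)%N by lia.
have [w [wW w0 ww]] := iso_vec A h2W.
set K := kermx (A *m w^T).
set W1 := (W :&: K)%MS.
set W2 := (W1 :&: w^C)%MS.
have r1 : (\rank W <= \rank W1 + 1)%N.
  have h1 := mxrank_sum_cap W K.
  have h2 := rank_leq_col (W + K)%MS.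
  have h3 := mxrank_ker (A *m w^T).
  have h4 := rank_leq_col (A *m w^T).
  have h5 := rank_leq_row (A *m w^T).
  rewrite -/K -/W1 in h1 h3; lia.
have r2 : (\rank W1 <= \rank W2 + 1)%N.
  have h1 := mxrank_sum_cap W1 (w^C)%MS.
  have h2 := rank_leq_col (W1 + w^C)%MS.
  have h3 := mxrank_compl w.
  rewrite rank_rV w0 in h3.
  rewrite -/W2 in h1; lia.
have [W3 [s3 i3 r3]] := IH W2 ltac:(lia).
have s3K : (W3 <= K)%MS.
  by apply: submx_trans s3 _; apply: submx_trans (capmxSl _ _) (capmxSr _ _).
have s3C : (W3 <= w^C)%MS by apply: submx_trans s3 (capmxSr _ _).
exists (W3 + w)%MS; split.
- rewrite addsmx_sub wW andbT; apply: submx_trans s3 _.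
  by apply: submx_trans (capmxSl _ _) (capmxSl _ _).
- exact: iso_add.
- have h1 := mxrank_sum_cap W3 w.
  have : (W3 :&: w <= (0 : 'M[F]_N))%MS.
    by rewrite -(capmx_compl w) capmxC capmxS.
  rewrite submx0 => /eqP h0; rewrite h0 mxrank0 rank_rV w0 in h1; lia.
Qed.

End Iso.
Section Dir.
Variable F : fieldType.
Variable N : nat.

Lemma inj_on k (V : 'M[F]_(k, N)) (X : 'M[F]_N) (v : 'rV[F]_N) :
  \rank (V *m X) = \rank V -> (v <= V)%MS -> v *m X = 0 -> v = 0.
Proof.
move=> hr hv hvX.
have : (v <= row_base V)%MS by rewrite eq_row_base.
case/submxP => c hc.
have hf : row_free (row_base V *m X).
  by rewrite /row_free (eqmxMr X (eq_row_base V)) hr.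
move: hvX; rewrite hc -mulmxA => /eqP; rewrite mulmx_free_eq0 // => /eqP ->.
by rewrite mul0mx.
Qed.

Lemma direct k (V : 'M[F]_(k, N)) s (M : 'I_s -> 'M[F]_N) (r : nat) :
  \rank V = r ->
  \rank (\sum_(i < s) <<V *m (M i)^T>>)%MS = (s * r)%N ->
  forall v : 'I_s -> 'rV[F]_N, (forall i, (v i <= V)%MS) ->
  \sum_i v i *m (M i)^T = 0 -> forall i, v i = 0.
Proof.
move=> hV hsum v hv hs.
have hle : forall i : 'I_s, (\rank <<V *m (M i)^T>>%MS <= r)%N.
  by move=> i; rewrite genmxE -hV mxrankM_maxl.
have hS : (\sum_(i < s) \rank <<V *m (M i)^T>>%MS <= s * r)%N.
  apply: (@leq_trans (\sum_(i < s) r)); first by apply: leq_sum => i _; exact: hle.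
  by rewrite sum_nat_const card_ord.
have hL : (\rank (\sum_(i < s) <<V *m (M i)^T>>)%MS <= \sum_(i < s) \rank <<V *m (M i)^T>>%MS ?= iff
   mxdirect (\sum_(i < s) <<V *m (M i)^T>>)%MS)%N := mxrank_sum_leqif _.
have hdir : mxdirect (\sum_(i < s) <<V *m (M i)^T>>)%MS.
  rewrite mxdirectEgeq /=; rewrite hsum in hL *; exact: hS.
have heq : forall i : 'I_s, \rank <<V *m (M i)^T>>%MS = r.
  move=> i0; apply/eqP; rewrite eqn_leq hle /=; apply/negP => /negP; rewrite -ltnNge => hlt.
  have : (\sum_(i < s) \rank <<V *m (M i)^T>>%MS < s * r)%N.
    have e : (s * r = \sum_(i < s) r)%N by rewrite sum_nat_const card_ord.
    rewrite e [X in (_ < X)%N](bigD1 i0) //= [X in (X < _)%N](bigD1 i0) //=.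
    by rewrite -addSn leq_add // leq_sum // => i _; exact: hle.
  move: hL => [hL1 _]; move: hL1; rewrite hsum => hL1 h2.
  by move: (leq_ltn_trans hL1 h2); rewrite ltnn.
move=> i.
apply: (@inj_on _ V (M i)^T); [by rewrite -(genmxE (V *m (M i)^T)) heq hV | exact: hv |].
move/mxdirect_sumsP: hdir => /(_ i isT) hcap.
have h1 : (v i *m (M i)^T <= <<V *m (M i)^T>>%MS)%MS by rewrite genmxE submxMr.
have h2 : (v i *m (M i)^T <= \sum_(j < s | true && (j != i)) <<V *m (M j)^T>>)%MS.
  have -> : v i *m (M i)^T = - \sum_(j < s | j != i) v j *m (M j)^T.
    by move: hs; rewrite (bigD1 i) //= => hs; apply/eqP; rewrite -addr_eq0 hs.
  rewrite -scaleN1r; apply: scalemx_sub; apply: summx_sub => j hj.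
  by apply: (sumsmx_sup j) => //; rewrite genmxE submxMr.
have : (v i *m (M i)^T <= (0 : 'M[F]_N))%MS by rewrite -hcap sub_capmx h1 h2.
by rewrite submx0 => /eqP.
Qed.
End Dir.
Section Main.
Variable F : fieldType.
Variables (N l s : nat).
Variable M : 'I_s -> 'M[F]_N.
Variable U : 'M[F]_N.

Let L := [pred j : 'I_N | (j < l)%N].
Let S := [pred j : 'I_N | (l <= j < l * s.+1)%N].
Let P1 := [pred j : 'I_N | (j < l * s.+1)%N].

Hypothesis hN : (l * s.+1 <= N)%N.
Hypothesis hUL : Ep L *m U = U.
Hypothesis hUind : indep L U.
Hypothesis hUiso : forall i, U *m M i *m U^T = 0.
Hypothesis hdirect : forall v : 'I_s -> 'rV[F]_N, (forall i, (v i <= U)%MS) ->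
  \sum_i v i *m (M i)^T = 0 -> forall i, v i = 0.

Definition Sh (i : nat) : 'M[F]_N :=
  \matrix_(j, c) ((nat_of_ord j == l * i.+1 + c)%N && (c < l)%N)%:R.

Definition XR := \sum_(i < s) Sh i *m U *m (M i)^T.

Lemma Sh_row (i : 'I_s) (c j : 'I_N) (i' : nat) : (c < l)%N ->
  nat_of_ord j = (l * i.+1 + c)%N ->
  row j (Sh i') = if i' == i then delta_mx 0 c else 0.
Proof.
move=> hc hj; apply/rowP => c'; rewrite !mxE hj.
case: (eqVneq i' (nat_of_ord i)) => [->|hne].
  case: (eqVneq c' c) => [->|hc']; first by rewrite !mxE !eqxx hc.
  rewrite [RHS]mxE eqxx /= (negbTE hc').
  case: (boolP (c' < l)%N) => hc'l; last by rewrite andbF.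
  rewrite andbT; case: eqP => // /(idx_inj hc hc'l) [_ /val_inj e].
  by move: hc'; rewrite e eqxx.
rewrite mxE; case: (boolP (c' < l)%N) => hc'l; last by rewrite andbF.
rewrite andbT; case: eqP => // /(idx_inj hc hc'l) [e _].
by move: hne; rewrite e eqxx.
Qed.

Lemma XR_row (i : 'I_s) (c j : 'I_N) : (c < l)%N ->
  nat_of_ord j = (l * i.+1 + c)%N -> row j XR = row c U *m (M i)^T.
Proof.
move=> hc hj; rewrite /XR rowE mulmx_sumr (bigD1 i) //= big1 => [|i' hi'].
  by rewrite !mulmxA -rowE (Sh_row _ hc hj) eqxx -rowE addr0.
rewrite !mulmxA -rowE (Sh_row _ hc hj).
have -> : (nat_of_ord i' == nat_of_ord i) = false by apply/negbTE.
by rewrite !mul0mx.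
Qed.

Lemma EpS_Sh (i : 'I_s) : Ep S *m Sh i = Sh i.
Proof.
apply/matrixP => j c; rewrite EpMl [Sh _ _ _]mxE.
case: eqP => [hj|]; last by rewrite mulr0.
case: (boolP (c < l)%N) => hc; last by rewrite mulr0.
rewrite /S inE hj; have hi := ltn_ord i.
have -> : (l <= l * i.+1 + c < l * s.+1)%N.
  apply/andP; split; first by apply: leq_trans (leq_addr _ _); rewrite leq_pmulr.
  apply: leq_trans (_ : l * i.+2 <= _)%N; first by have := mulnSr l i.+1; lia.
  by rewrite leq_mul2l ltnS hi orbT.
by rewrite mul1r.
Qed.

Lemma Sh_L (i : nat) : Sh i *m Ep L = Sh i.
Proof.
apply/matrixP => j c; rewrite EpMr [Sh _ _ _]mxE /L inE.
by case: (c < l)%N; rewrite ?andbF ?mulr1 ?mul0r.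
Qed.

Lemma EpS_XR : Ep S *m XR = XR.
Proof. by rewrite /XR mulmx_sumr; apply: eq_bigr => i _; rewrite !mulmxA EpS_Sh. Qed.

Lemma U_XR : U *m XR^T = 0.
Proof.
apply: trmx_inj; rewrite trmx_mul trmxK trmx0 /XR mulmx_suml big1 // => i _.
have e : (U *m M i *m U^T)^T = U *m (M i)^T *m U^T by rewrite !trmx_mul trmxK mulmxA.
by rewrite hUiso trmx0 in e; rewrite -!mulmxA (mulmxA U) -e mulmx0.
Qed.


Lemma XR_indep : indep S XR.
Proof.
move=> a ha haX.
have hv : forall i : 'I_s, a *m Sh i *m U = 0.
  apply: hdirect => [i|]; first exact: submxMl.
  by rewrite [RHS]/= -[RHS]haX /XR mulmx_sumr; apply: eq_bigr => i _; rewrite !mulmxA.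
have hsh : forall i : 'I_s, a *m Sh i = 0.
  by move=> i; apply: hUind; [rewrite -mulmxA Sh_L | exact: hv i].
apply/rowP => j; rewrite [RHS]mxE.
case: (boolP (S j)) => Sj; last first.
  by move/rowP: ha => /(_ j); rewrite EpMr (negbTE Sj) mulr0 => <-.
move: Sj; rewrite /S /= => /andP [hlj hjs].
have hl : (0 < l)%N by case: l hlj hjs => //; rewrite mul0n.
have hi : ((j - l) %/ l < s)%N by rewrite ltn_divLR // mulnC; move: hjs; rewrite mulnS; lia.
have hc : ((j - l) %% l < l)%N by rewrite ltn_pmod.
have hjd : nat_of_ord j = (l * ((j - l) %/ l).+1 + (j - l) %% l)%N.
  have := divn_eq (j - l) l; rewrite mulnS; lia.
have hcN : ((j - l) %% l < N)%N by apply: leq_trans hc _; apply: leq_trans hlj _; exact: ltnW.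
move: (hsh (Ordinal hi)) => /rowP /(_ (Ordinal hcN)).
rewrite !mxE (bigD1 j) //= big1 => [|j' hj'].
  by rewrite [Sh _ _ _]mxE /= -hjd eqxx hc mulr1 addr0.
rewrite [Sh _ _ _]mxE /= -hjd.
have -> : (nat_of_ord j' == nat_of_ord j) = false by apply/negbTE.
by rewrite mulr0.
Qed.

Lemma Ep_ext (P Q : pred 'I_N) : (forall j, P j = Q j) -> Ep P = Ep Q :> 'M[F]_N.
Proof. by move=> h; apply/matrixP => i j; rewrite !EpE h. Qed.

Lemma Ep_sup (P Q : pred 'I_N) : (forall j, Q j -> P j) -> Ep P *m Ep Q = Ep Q :> 'M[F]_N.
Proof.
move=> h; rewrite EpEp; apply: Ep_ext => j /=.
by case Qj: (Q j); rewrite ?andbF // (h j Qj).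
Qed.

Lemma main_g : exists g : 'M[F]_N,
  [/\ g \in unitmx, g *m XR^T = Ep S & Ep L *m g = U].
Proof.
have [h [hu hh]] := ext_unit XR_indep.
rewrite EpS_XR in hh.
set Y := Ep S *m (invmx h)^T.
have hYX : Y *m XR^T = Ep S.
  rewrite -hh trmx_mul /Y !mulmxA -(mulmxA (Ep S)) -trmx_mul mulmxV //.
  by rewrite trmx1 mulmx1 Ep_tr Epid.
have hXE : XR^T *m Ep S = XR^T.
  have := congr1 trmx EpS_XR; rewrite trmx_mul Ep_tr => e.
  by rewrite -{1}e -mulmxA Epid e.
have hYS : Ep S *m Y = Y by rewrite /Y mulmxA Epid.
have hLS : Ep L *m Ep S = 0 :> 'M[F]_N.
  apply/matrixP => i j; rewrite EpEp EpE mxE /=.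
  by case: (ltnP i l); rewrite /= ?andbF.
have hSL : Ep S *m Ep L = 0 :> 'M[F]_N.
  apply/matrixP => i j; rewrite EpEp EpE mxE /=.
  by case: (ltnP i l); rewrite /= ?andbF.
set F0 := U + Y.
have hP1 : Ep P1 = Ep L + Ep S :> 'M[F]_N.
  rewrite EpD; last by move=> j /= hj; rewrite leqNgt hj.
  apply: Ep_ext => j /=.
  case: (ltnP j l) => hj //=.
  have : (l <= l * s.+1)%N by rewrite leq_pmulr.
  lia.
have hF0 : indep P1 F0.
  move=> a ha haF.
  have haS : a *m Ep S = 0.
    have := congr1 (mulmx^~ XR^T) haF.
    by rewrite mul0mx /F0 mulmxDr mulmxDl -mulmxA U_XR mulmx0 add0r -mulmxA hYX.
  have haL : a *m Ep L = a by rewrite -{2}ha hP1 mulmxDr haS addr0.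
  have haY : a *m Y = 0 by rewrite -hYS mulmxA haS mul0mx.
  apply: hUind => //.
  by move: haF; rewrite /F0 mulmxDr haY addr0.
have [g0 [hu0 hg0]] := ext_unit hF0.
have hP1L : Ep P1 *m Ep L = Ep L :> 'M[F]_N by apply: Ep_sup => j /= hj; lia.
have hP1S : Ep P1 *m Ep S = Ep S :> 'M[F]_N by apply: Ep_sup => j /= /andP [_ hj].
have hP1F : Ep P1 *m F0 = F0.
  by rewrite /F0 mulmxDr -{1}hUL -{1}hYS mulmxA hP1L (mulmxA (Ep P1)) hP1S hUL hYS.
rewrite hP1F in hg0.
have hL1 : Ep L *m Ep P1 = Ep L :> 'M[F]_N by apply: Ep_sub => j /= hj; lia.
have hS1 : Ep S *m Ep P1 = Ep S :> 'M[F]_N by apply: Ep_sub => j /= /andP [_ hj].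
have hLg0 : Ep L *m g0 = U.
  rewrite -hL1 -mulmxA hg0 /F0 mulmxDr hUL -hYS mulmxA hLS mul0mx addr0.
  by [].
have hSg0 : Ep S *m g0 = Y.
  by rewrite -hS1 -mulmxA hg0 /F0 mulmxDr -hUL mulmxA hSL mul0mx add0r hYS.
set g := g0 - (g0 *m XR^T - Ep S) *m Y.
have hSg : Ep S *m g = Y.
  by rewrite /g mulmxBr hSg0 mulmxA mulmxBr Epid (mulmxA (Ep S) g0) hSg0 hYX subrr mul0mx subr0.
exists g; split.
- have e : g0 = (1%:M + (g0 *m XR^T - Ep S) *m Ep S) *m g.
    by rewrite mulmxDl mul1mx -mulmxA hSg /g subrK.
  by move: hu0; rewrite e unitmx_mul => /andP [_ ->].
- rewrite /g mulmxBl -(mulmxA _ Y) hYX mulmxBl -mulmxA hXE Epid.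
  by rewrite opprB addrC subrK.
- by rewrite /g mulmxBr hLg0 mulmxA mulmxBr hLS (mulmxA (Ep L) g0) hLg0 U_XR subrr mul0mx subr0.
Qed.

Lemma colT_entry (A B : 'M[F]_N) (r c : 'I_N) : (A *m B^T) r c = (A *m (row c B)^T) r 0.
Proof. by rewrite !mxE; apply: eq_bigr => k _; rewrite !mxE. Qed.

Lemma final_g : exists g : 'M[F]_N, g \in unitmx /\
  forall (i : 'I_s) (r c : 'I_N), (c < l)%N ->
    (g *m M i *m g^T) r c = (if nat_of_ord r == (l * i.+1 + c)%N then 1 else 0).
Proof.
have [g [hu hX hL]] := main_g.
exists g; split => // i r c hc.
have hi := ltn_ord i.
have hjN : (l * i.+1 + c < N)%N.
  apply: leq_trans hN; apply: leq_trans (_ : l * i.+2 <= _)%N.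
    by have := mulnSr l i.+1; lia.
  by rewrite leq_mul2l ltnS hi orbT.
set j := Ordinal hjN.
have hrow : row c g = row c U.
  rewrite -hL; apply/rowP => k; rewrite [RHS]mxE EpMl !mxE /= hc mul1r.
  by [].
have e2 : M i *m (row c U)^T = (row j XR)^T.
  by rewrite (@XR_row i c j hc (erefl _)) trmx_mul trmxK.
rewrite colT_entry hrow -mulmxA e2 -colT_entry hX EpE.
case: (eqVneq r j) => [->|hne].
  rewrite eqxx /= andbT; have -> : (l <= l * i.+1 + c < l * s.+1)%N.
    apply/andP; split; first by apply: leq_trans (leq_addr _ _); rewrite leq_pmulr.
    apply: leq_trans (_ : l * i.+2 <= _)%N; first by have := mulnSr l i.+1; lia.
    by rewrite leq_mul2l ltnS hi orbT.
  by [].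
rewrite andbF.
have -> : (nat_of_ord r == (l * i.+1 + c)%N) = false.
  by apply/negbTE; apply: contra hne => /eqP h; apply/eqP/val_inj.
by [].
Qed.

End Main.

Section Fin.
Variable F : numClosedFieldType.
Variable N : nat.

Lemma symlem (A : 'M[F]_N) : A^T = A \/ A^T = - A ->
  forall x y : 'rV[F]_N, x *m A *m y^T = 0 -> y *m A *m x^T = 0.
Proof.
move=> hA x y h; apply: trmx_inj; rewrite trmx0.
have -> : (y *m A *m x^T)^T = x *m A^T *m y^T by rewrite !trmx_mul trmxK mulmxA.
by case: hA => ->; rewrite ?h // mulmxN mulNmx h oppr0.
Qed.

Lemma iso_mx (A W U : 'M[F]_N) : iso A W -> (U <= W)%MS -> U *m A *m U^T = 0.
Proof.
move=> hi hU; apply/matrixP => r c; rewrite [RHS]mxE.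
have := hi (row r U) (row c U) (submx_trans (row_sub _ _) hU) (submx_trans (row_sub _ _) hU).
move/matrixP => /(_ 0 0); rewrite [X in _ = X]mxE => <-.
rewrite colT_entry.
have -> : forall B : 'M[F]_(N, 1), B r 0 = (row r B) 0 0 by move=> B; rewrite mxE.
by rewrite !row_mul.
Qed.

Lemma chain s (M : 'I_s -> 'M[F]_N)
  (hM : forall i (x y : 'rV[F]_N), x *m M i *m y^T = 0 -> y *m M i *m x^T = 0) l :
  forall n, (n <= s)%N -> forall W : 'M[F]_N, (2 ^ n * l <= \rank W)%N ->
  exists U : 'M[F]_N, [/\ (U <= W)%MS, (l <= \rank U)%N &
     forall i : 'I_s, (i < n)%N -> iso (M i) U].
Proof.
elim => [|n IH] hn W hW.
  by exists W; split => //; move: hW; rewrite expn0 mul1n.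
have hns : (n < s)%N by [].
have [W' [s1 i1 r1]] := halve (hM (Ordinal hns)) (m := (2 ^ n * l)%N) (W := W)
   ltac:(by rewrite mulnA -expnS).
have [U [s2 r2 i2]] := IH (ltnW hn) W' r1.
exists U; split => //; first exact: submx_trans s2 s1.
move=> i hi; case: (ltngtP i n) => h.
- exact: i2.
- by move: hi; rewrite ltnS leqNgt h.
- have -> : i = Ordinal hns by apply: val_inj.
  exact: iso_sub s2 i1.
Qed.

End Fin.

Section BU.
Variable F : fieldType.
Variable N : nat.

Lemma build_U l (W : 'M[F]_N) : (l <= \rank W)%N ->
  exists U : 'M[F]_N, [/\ (U <= W)%MS, Ep [pred j : 'I_N | (j < l)%N] *m U = U &
     indep [pred j : 'I_N | (j < l)%N] U].
Proof.
move=> hl.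
set L := [pred j : 'I_N | (j < l)%N].
set T : 'M[F]_(N, \rank W) := \matrix_(j, k) (nat_of_ord j == nat_of_ord k)%:R.
exists (Ep L *m T *m row_base W); split.
- by apply: submx_trans (submxMl _ _) _; rewrite eq_row_base.
- by rewrite !mulmxA Epid.
move=> a ha haU.
have haT : a *m T = 0.
  apply/eqP; rewrite -(mulmx_free_eq0 _ (row_base_free W)).
  by rewrite -ha -!mulmxA (mulmxA (Ep L)) haU.
apply/rowP => j; rewrite [RHS]mxE.
case: (boolP (L j)) => Lj; last first.
  by move/rowP: ha => /(_ j); rewrite EpMr (negbTE Lj) mulr0 => <-.
have hk : (nat_of_ord j < \rank W)%N by apply: leq_trans hl.
move/rowP: haT => /(_ (Ordinal hk)); rewrite !mxE (bigD1 j) //= big1 => [|j' hj'].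
  by rewrite !mxE eqxx mulr1 addr0.
rewrite !mxE.
have -> : (nat_of_ord j' == nat_of_ord j) = false by apply/negbTE.
by rewrite mulr0.
Qed.

End BU.

Unset Implicit Arguments.
Set Strict Implicit.

Theorem lemma3p7 (F : numClosedFieldType) (p q l N : nat)
  (M : 'I_(p + q) -> 'M[F]_N)
  (hSym : forall i : 'I_(p + q), (i < p)%N -> (M i)^T = M i)
  (hAlt : forall i : 'I_(p + q), (p <= i)%N -> (M i)^T = - M i)
  (k : nat) (V : 'M[F]_(k, N))
  (hV : \rank V = (2 ^ (p + q) * l)%N)
  (hsum : \rank (\sum_(i < p + q) <<image_space (M i) V>>)%MS
          = ((p + q) * 2 ^ (p + q) * l)%N) :
  exists g : 'M[F]_N, g \in unitmx /\
    forall (i : 'I_(p + q)) (r c : 'I_N), (c < l)%N ->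
      (g *m M i *m g^T) r c
      = (if nat_of_ord r == (l * i.+1 + c)%N then 1 else 0).
Proof.
case: (posnP (p + q)) => hs0.
  exists 1%:M; split; first exact: unitmx1.
  by move=> i; have := ltn_ord i; rewrite [X in (_ < X)%N]hs0.
have hM : forall i (x y : 'rV[F]_N), x *m M i *m y^T = 0 -> y *m M i *m x^T = 0.
  move=> i; apply: symlem; case: (ltnP i p) => h; [left; exact: hSym | right; exact: hAlt].
have hW0 : (2 ^ (p + q) * l <= \rank <<V>>%MS)%N by rewrite genmxE hV.
have [W [sW rW iW]] := chain hM (leqnn _) hW0.
have [U [sU hUL hUind]] := build_U rW.
have hUV : (U <= V)%MS by rewrite -(genmxE V); exact: submx_trans sU sW.
have hUiso : forall i, U *m M i *m U^T = 0.
  by move=> i; apply: (iso_mx (iW i (ltn_ord i)) sU).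
have hdirect : forall v : 'I_(p + q) -> 'rV[F]_N, (forall i, (v i <= U)%MS) ->
    \sum_i v i *m (M i)^T = 0 -> forall i, v i = 0.
  move=> v hv; apply: (direct (V := V) (r := (2 ^ (p + q) * l)%N)) => //.
  - by rewrite mulnA; exact: hsum.
  - by move=> i; exact: submx_trans (hv i) hUV.
have hN : (l * (p + q).+1 <= N)%N.
  have := rank_leq_col (\sum_(i < p + q) <<image_space (M i) V>>)%MS; rewrite hsum.
  have h2 : (2 <= 2 ^ (p + q))%N by rewrite -{1}(expn1 2) leq_pexp2l.
  nia.
exact: (final_g hN hUL hUind hUiso hdirect).
Qed.
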